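(* Let $(H,\cdot,1,\Delta,\epsilon,S,\rightharpoonup)$ be a Yetter--Drinfeld post-Hopf algebra, and define $x\bullet_\rightharpoonup y:=x_1\cdot(x_2\rightharpoonup y)$ and $S_\rightharpoonup(x):=\beta_\rightharpoonup(x_1)(S(x_2))$ for $x,y\in H$. Then $H_\rightharpoonup:=(H,\bullet_\rightharpoonup,1,\Delta,\epsilon,S_\rightharpoonup)$ is a Hopf algebra (in particular $\bullet_\rightharpoonup$ is associative with unit $1$, $\Delta$ and $\epsilon$ are multiplicative for $\bullet_\rightharpoonup$, and $S_\rightharpoonup$ is an antipode).
   Context: Conventions: $\Bbbk$ is a field; algebras are associative unital, coalgebras coassociative counital; Sweedler notation $\Delta(c)=c_1\otimes c_2$ (summation omitted), iterated as $c_1\otimes c_2\otimes c_3$ etc.; $H\otimes H$ carries the tensor product coalgebra structure. Definition (Yetter--Drinfeld post-Hopf algebra). A tuple $(H,\cdot,1,\Delta,\epsilon,S,\rightharpoonup)$ where $(H,\cdot,1)$ is an algebra, $(H,\Delta,\epsilon)$ is a coalgebra on the same vector space, $S:H\to H$ is linear with $x_1\cdot S(x_2)=S(x_1)\cdot x_2=\epsilon(x)1$ for all $x$, and $\rightharpoonup:H\otimes H\to H$ is a coalgebra morphism, such that for all $x,y,z\in H$: (P1) $x\rightharpoonup(y\cdot z)=(x_1\rightharpoonup y)\cdot(x_2\rightharpoonup z)$; (P2) $x\rightharpoonup(y\rightharpoonup z)=\big(x_1\cdot(x_2\rightharpoonup y)\big)\rightharpoonup z$; (P3) the map $\alpha_\rightharpoonup:H\to\mathrm{End}(H)$,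 $\alpha_\rightharpoonup(x)(y)=x\rightharpoonup y$, is convolution invertible, i.e. there is $\beta_\rightharpoonup:H\to\mathrm{End}(H)$ with $\alpha_\rightharpoonup(x_1)\circ\beta_\rightharpoonup(x_2)=\beta_\rightharpoonup(x_1)\circ\alpha_\rightharpoonup(x_2)=\epsilon(x)\mathrm{Id}_H$; (P4) $\epsilon(a\cdot b)=\epsilon(a)\epsilon(b)$, $\epsilon(1)=1_\Bbbk$, $\Delta(1)=1\otimes 1$; (P5) $\Delta(x\cdot y)=\Big(x_1\cdot\alpha_\rightharpoonup(x_2)\big(\beta_\rightharpoonup(x_4)(y_1)\big)\Big)\otimes(x_3\cdot y_2)$; (P6) setting $x\bullet_\rightharpoonup y:=x_1\cdot(x_2\rightharpoonup y)$, $S_\rightharpoonup(x):=\beta_\rightharpoonup(x_1)(S(x_2))$ and $x\leftharpoonup y:=\big(S_\rightharpoonup(x_1\rightharpoonup y_1)\bullet_\rightharpoonup x_2\big)\bullet_\rightharpoonup y_2$, one has $\Delta(S_\rightharpoonup(x))=S_\rightharpoonup(x_2)\otimes S_\rightharpoonup(x_1)$ and $(x_1\rightharpoonup y_1)\otimes(x_2\leftharpoonup y_2)=(x_2\rightharpoonup y_2)\otimes(x_1\leftharpoonup y_1)$. *)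

(* Defs.v *)
(* Tensor products are not available in MathComp, so
   tensors are handled through their universal property: a comultiplication
   is given by a representative list  Delta x = [:: (a_i, b_i)]  of
   x_1 (x) x_2 = sum_i a_i (x) b_i, and an equality of tensors in H (x) H
   (resp. H (x) H (x) H) is stated as equality of the images under every
   bilinear (resp. trilinear) map into every K-vector space V. *)
From HB Require Import structures.
From mathcomp Require Import all_boot all_algebra.
Set Implicit Arguments.
Unset Strict Implicit.
Unset Printing Implicit Defensive.
Import GRing.Theory.
Local Open Scope ring_scope.

Section PostHopf.
Variables (K : fieldType) (H : lmodType K).

Definition linear1 (V W : lmodType K) (f : V -> W) : Prop :=
  forall (a : K) (x y : V), f (a *: x + y) = a *: f x + f y.

Definition bilin (V : lmodType K) (f : H -> H -> V) : Prop :=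
  (forall y, linear1 (fun x => f x y)) /\ (forall x, linear1 (f x)).

Definition trilin (V : lmodType K) (f : H -> H -> H -> V) : Prop :=
  [/\ forall y z, linear1 (fun x => f x y z),
      forall x z, linear1 (fun y => f x y z) &
      forall x y, linear1 (f x y)].

(* Sweedler sums:  sw2 Delta x F = F x_1 x_2, etc. *)
Definition sw2 (Delta : H -> seq (H * H)) (V : zmodType) (x : H)
  (F : H -> H -> V) : V := \sum_(p <- Delta x) F p.1 p.2.

Definition sw3 (Delta : H -> seq (H * H)) (V : zmodType) (x : H)
  (F : H -> H -> H -> V) : V :=
  sw2 Delta x (fun a b => sw2 Delta b (fun c d => F a c d)).

Definition sw4 (Delta : H -> seq (H * H)) (V : zmodType) (x : H)
  (F : H -> H -> H -> H -> V) : V :=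
  sw2 Delta x (fun a b => sw3 Delta b (F a)).

Record is_algebra (mul : H -> H -> H) (one : H) : Prop := {
  alg_bilin : bilin mul;
  alg_assoc : forall x y z, mul x (mul y z) = mul (mul x y) z;
  alg_mul1 : forall x, mul one x = x;
  alg_mul1r : forall x, mul x one = x }.

Record is_coalgebra (Delta : H -> seq (H * H)) (eps : H -> K) : Prop := {
  coalg_Delta_lin : forall (V : lmodType K) (f : H -> H -> V), bilin f ->
    forall (a : K) (x y : H),
      sw2 Delta (a *: x + y) f = a *: sw2 Delta x f + sw2 Delta y f;
  coalg_eps_lin : forall (a : K) (x y : H), eps (a *: x + y) = a * eps x + eps y;
  coalg_coassoc : forall (V : lmodType K) (f : H -> H -> H -> V), trilin f ->
    forall x, sw2 Delta x (fun a b => sw2 Delta a (fun c d => f c d b))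
              = sw3 Delta x f;
  coalg_counit_l : forall x, sw2 Delta x (fun a b => eps a *: b) = x;
  coalg_counit_r : forall x, sw2 Delta x (fun a b => eps b *: a) = x }.

Record is_bialgebra (mul : H -> H -> H) (one : H)
    (Delta : H -> seq (H * H)) (eps : H -> K) : Prop := {
  bialg_alg : is_algebra mul one;
  bialg_coalg : is_coalgebra Delta eps;
  bialg_Delta_mul : forall x y (V : lmodType K) (f : H -> H -> V), bilin f ->
    sw2 Delta (mul x y) f
    = sw2 Delta x (fun x1 x2 => sw2 Delta y (fun y1 y2 =>
        f (mul x1 y1) (mul x2 y2)));
  bialg_Delta_one : forall (V : lmodType K) (f : H -> H -> V), bilin f ->
    sw2 Delta one f = f one one;
  bialg_eps_mul : forall x y, eps (mul x y) = eps x * eps y;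
  bialg_eps_one : eps one = 1 }.

Record is_Hopf (mul : H -> H -> H) (one : H)
    (Delta : H -> seq (H * H)) (eps : H -> K) (S : H -> H) : Prop := {
  hopf_bialg : is_bialgebra mul one Delta eps;
  hopf_S_lin : linear1 S;
  hopf_antipode_l : forall x, sw2 Delta x (fun a b => mul a (S b)) = eps x *: one;
  hopf_antipode_r : forall x, sw2 Delta x (fun a b => mul (S a) b) = eps x *: one }.

Definition bullet (mul : H -> H -> H) (Delta : H -> seq (H * H))
  (rh : H -> H -> H) (x y : H) : H :=
  sw2 Delta x (fun x1 x2 => mul x1 (rh x2 y)).

Definition Srh (Delta : H -> seq (H * H)) (be : H -> H -> H) (S : H -> H)
  (x : H) : H := sw2 Delta x (fun x1 x2 => be x1 (S x2)).

Definition lh (mul : H -> H -> H) (Delta : H -> seq (H * H))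
  (rh be : H -> H -> H) (S : H -> H) (x y : H) : H :=
  sw2 Delta x (fun x1 x2 => sw2 Delta y (fun y1 y2 =>
    bullet mul Delta rh (bullet mul Delta rh (Srh Delta be S (rh x1 y1)) x2) y2)).

(* Yetter--Drinfeld post-Hopf algebra; [be] is the convolution inverse
   beta of alpha (x) = (x -> _), viewed as a bilinear map be x y = beta(x)(y). *)
Record is_YD_post_Hopf (mul : H -> H -> H) (one : H)
    (Delta : H -> seq (H * H)) (eps : H -> K) (S : H -> H)
    (rh be : H -> H -> H) : Prop := {
  yd_alg : is_algebra mul one;
  yd_coalg : is_coalgebra Delta eps;
  yd_S_lin : linear1 S;
  yd_S_l : forall x, sw2 Delta x (fun a b => mul a (S b)) = eps x *: one;
  yd_S_r : forall x, sw2 Delta x (fun a b => mul (S a) b) = eps x *: one;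
  yd_rh_bilin : bilin rh;
  yd_rh_Delta : forall x y (V : lmodType K) (f : H -> H -> V), bilin f ->
    sw2 Delta (rh x y) f
    = sw2 Delta x (fun x1 x2 => sw2 Delta y (fun y1 y2 =>
        f (rh x1 y1) (rh x2 y2)));
  yd_rh_eps : forall x y, eps (rh x y) = eps x * eps y;
  yd_P1 : forall x y z,
    rh x (mul y z) = sw2 Delta x (fun x1 x2 => mul (rh x1 y) (rh x2 z));
  yd_P2 : forall x y z,
    rh x (rh y z) = rh (sw2 Delta x (fun x1 x2 => mul x1 (rh x2 y))) z;
  yd_be_bilin : bilin be;
  yd_P3_l : forall x y, sw2 Delta x (fun x1 x2 => rh x1 (be x2 y)) = eps x *: y;
  yd_P3_r : forall x y, sw2 Delta x (fun x1 x2 => be x1 (rh x2 y)) = eps x *: y;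
  yd_eps_mul : forall a b, eps (mul a b) = eps a * eps b;
  yd_eps_one : eps one = 1;
  yd_Delta_one : forall (V : lmodType K) (f : H -> H -> V), bilin f ->
    sw2 Delta one f = f one one;
  yd_P5 : forall x y (V : lmodType K) (f : H -> H -> V), bilin f ->
    sw2 Delta (mul x y) f
    = sw4 Delta x (fun x1 x2 x3 x4 => sw2 Delta y (fun y1 y2 =>
        f (mul x1 (rh x2 (be x4 y1))) (mul x3 y2)));
  yd_P6_Srh : forall x (V : lmodType K) (f : H -> H -> V), bilin f ->
    sw2 Delta (Srh Delta be S x) f
    = sw2 Delta x (fun x1 x2 => f (Srh Delta be S x2) (Srh Delta be S x1));
  yd_P6_lh : forall x y (V : lmodType K) (f : H -> H -> V), bilin f ->
    sw2 Delta x (fun x1 x2 => sw2 Delta y (fun y1 y2 =>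
      f (rh x1 y1) (lh mul Delta rh be S x2 y2)))
    = sw2 Delta x (fun x1 x2 => sw2 Delta y (fun y1 y2 =>
      f (rh x2 y2) (lh mul Delta rh be S x1 y1))) }.

End PostHopf.

(* Main.v *)
Require Import Defs.
From HB Require Import structures.
From mathcomp Require Import all_boot all_algebra.
Set Implicit Arguments.
Unset Strict Implicit.
Unset Printing Implicit Defensive.
Import GRing.Theory.
Local Open Scope ring_scope.

Section Lin.
Variable K : fieldType.

Lemma lin0 (V W : lmodType K) (f : V -> W) : linear1 f -> f 0 = 0.
Proof.
move=> hf; have := hf 1 0 0; rewrite !scale1r !addr0 => e.
by have := congr1 (fun v => v - f 0) e; rewrite /= !addrK subrr.
Qed.

Lemma linD (V W : lmodType K) (f : V -> W) x y : linear1 f -> f (x + y) = f x + f y.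
Proof. by move=> hf; have := hf 1 x y; rewrite !scale1r. Qed.

Lemma linZ (V W : lmodType K) (f : V -> W) a x : linear1 f -> f (a *: x) = a *: f x.
Proof. by move=> hf; rewrite -[a *: x]addr0 hf (lin0 hf) addr0. Qed.

Lemma lin_sum (V W : lmodType K) (f : V -> W) (I : Type) (s : seq I) (F : I -> V) :
  linear1 f -> f (\sum_(i <- s) F i) = \sum_(i <- s) f (F i).
Proof.
move=> hf; elim: s => [|i s IH]; first by rewrite !big_nil (lin0 hf).
by rewrite !big_cons (linD _ _ hf) IH.
Qed.

Lemma lin_id (V : lmodType K) : linear1 (fun t : V => t).
Proof. by []. Qed.

Lemma lin_scale (V W : lmodType K) (g : V -> W) c : linear1 g -> linear1 (fun t => c *: g t).
Proof. by move=> hg a x y; rewrite hg scalerDr !scalerA mulrC. Qed.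

End Lin.

Section Sweedler.
Variables (K : fieldType) (H : lmodType K) (Delta : H -> seq (H * H)) (eps : H -> K).
Hypothesis hc : is_coalgebra Delta eps.
Local Notation sw := (sw2 Delta).

Lemma sw_ext (V : zmodType) x (F G : H -> H -> V) :
  (forall a b, F a b = G a b) -> sw x F = sw x G.
Proof. by move=> e; apply: eq_bigr => p _; rewrite e. Qed.

Lemma sw_exch (V : zmodType) x y (G : H -> H -> H -> H -> V) :
  sw x (fun a b => sw y (fun c d => G a b c d)) = sw y (fun c d => sw x (fun a b => G a b c d)).
Proof. exact: exchange_big. Qed.

Lemma lin_sw (V W : lmodType K) (g : V -> W) x F :
  linear1 g -> g (sw x F) = sw x (fun a b => g (F a b)).
Proof. exact: lin_sum. Qed.

Lemma sw_scale (V : lmodType K) x (F : H -> H -> V) c :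
  sw x (fun a b => c *: F a b) = c *: sw x F.
Proof. by rewrite /sw2 scaler_sumr. Qed.

Lemma sw_lin_x (V W : lmodType K) (F : H -> H -> V) (g : W -> H) :
  bilin F -> linear1 g -> linear1 (fun t => sw (g t) F).
Proof. by move=> hF hg a x y; rewrite hg (coalg_Delta_lin hc hF). Qed.

Lemma sw_lin_p (V W : lmodType K) x (F : W -> H -> H -> V) :
  (forall a b, linear1 (fun t => F t a b)) -> linear1 (fun t => sw x (F t)).
Proof.
move=> hF a u v; rewrite /sw2 scaler_sumr -big_split /=.
by apply: eq_bigr => p _; rewrite hF.
Qed.

Lemma lin_epsZ (V W : lmodType K) (g : W -> H) (v : V) :
  linear1 g -> linear1 (fun t => eps (g t) *: v).
Proof. by move=> hg a x y; rewrite hg (coalg_eps_lin hc) scalerDl scalerA. Qed.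

Lemma counit_lg (V : lmodType K) (g : H -> V) x :
  linear1 g -> sw x (fun a b => eps a *: g b) = g x.
Proof.
move=> hg; rewrite -{2}(coalg_counit_l hc x) (lin_sw _ _ hg).
by apply: sw_ext => a b; rewrite (linZ _ _ hg).
Qed.

Lemma counit_rg (V : lmodType K) (g : H -> V) x :
  linear1 g -> sw x (fun a b => eps b *: g a) = g x.
Proof.
move=> hg; rewrite -{2}(coalg_counit_r hc x) (lin_sw _ _ hg).
by apply: sw_ext => a b; rewrite (linZ _ _ hg).
Qed.

End Sweedler.
Section Main.
Variables (K : fieldType) (H : lmodType K).
Variables (mul : H -> H -> H) (one : H) (Delta : H -> seq (H * H)) (eps : H -> K)
    (S : H -> H) (rh be : H -> H -> H).
Hypothesis hyd : is_YD_post_Hopf mul one Delta eps S rh be.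
Local Notation sw := (sw2 Delta).
Local Notation hc := (yd_coalg hyd).
Local Notation hA := (yd_alg hyd).
Local Notation bu := (bullet mul Delta rh).
Local Notation T := (Srh Delta be S).

Lemma lin_comp (U V W : lmodType K) (f : V -> W) (g : U -> V) :
  linear1 f -> linear1 g -> linear1 (fun t => f (g t)).
Proof. by move=> hf hg a x y; rewrite hg hf. Qed.

Lemma lin_mulL (U : lmodType K) (g : U -> H) y : linear1 g -> linear1 (fun t => mul (g t) y).
Proof. by move=> hg; exact: (@lin_comp _ _ _ (fun u => mul u y) g ((alg_bilin hA).1 y) hg). Qed.
Lemma lin_mulR (U : lmodType K) (g : U -> H) y : linear1 g -> linear1 (fun t => mul y (g t)).
Proof. by move=> hg; exact: (@lin_comp _ _ _ (fun u => mul y u) g ((alg_bilin hA).2 y) hg). Qed.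
Lemma lin_rhL (U : lmodType K) (g : U -> H) y : linear1 g -> linear1 (fun t => rh (g t) y).
Proof. by move=> hg; exact: (@lin_comp _ _ _ (fun u => rh u y) g ((yd_rh_bilin hyd).1 y) hg). Qed.
Lemma lin_rhR (U : lmodType K) (g : U -> H) y : linear1 g -> linear1 (fun t => rh y (g t)).
Proof. by move=> hg; exact: (@lin_comp _ _ _ (fun u => rh y u) g ((yd_rh_bilin hyd).2 y) hg). Qed.
Lemma lin_beL (U : lmodType K) (g : U -> H) y : linear1 g -> linear1 (fun t => be (g t) y).
Proof. by move=> hg; exact: (@lin_comp _ _ _ (fun u => be u y) g ((yd_be_bilin hyd).1 y) hg). Qed.
Lemma lin_beR (U : lmodType K) (g : U -> H) y : linear1 g -> linear1 (fun t => be y (g t)).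
Proof. by move=> hg; exact: (@lin_comp _ _ _ (fun u => be y u) g ((yd_be_bilin hyd).2 y) hg). Qed.
Lemma lin_S (U : lmodType K) (g : U -> H) : linear1 g -> linear1 (fun t => S (g t)).
Proof. by move=> hg; exact: (@lin_comp _ _ _ (fun u => S u) g (yd_S_lin hyd) hg). Qed.
Lemma lin_fL (U V : lmodType K) (f : H -> H -> V) (g : U -> H) y :
  bilin f -> linear1 g -> linear1 (fun t => f (g t) y).
Proof. by move=> hf hg; exact: (@lin_comp _ _ _ (fun u => f u y) g (hf.1 y) hg). Qed.
Lemma lin_fR (U V : lmodType K) (f : H -> H -> V) (g : U -> H) y :
  bilin f -> linear1 g -> linear1 (fun t => f y (g t)).
Proof. by move=> hf hg; exact: (@lin_comp _ _ _ (fun u => f y u) g (hf.2 y) hg). Qed.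
Lemma lin_f3a (U V : lmodType K) (f : H -> H -> H -> V) (g : U -> H) y z :
  trilin f -> linear1 g -> linear1 (fun t => f (g t) y z).
Proof. by case=> h1 _ _ hg; exact: (@lin_comp _ _ _ (fun u => f u y z) g (h1 y z) hg). Qed.
Lemma lin_f3b (U V : lmodType K) (f : H -> H -> H -> V) (g : U -> H) y z :
  trilin f -> linear1 g -> linear1 (fun t => f y (g t) z).
Proof. by case=> _ h1 _ hg; exact: (@lin_comp _ _ _ (fun u => f y u z) g (h1 y z) hg). Qed.
Lemma lin_f3c (U V : lmodType K) (f : H -> H -> H -> V) (g : U -> H) y z :
  trilin f -> linear1 g -> linear1 (fun t => f y z (g t)).
Proof. by case=> _ _ h1 hg; exact: (@lin_comp _ _ _ (fun u => f y z u) g (h1 y z) hg). Qed.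
Lemma lin_swx (U V : lmodType K) (F : H -> H -> V) (g : U -> H) :
  bilin F -> linear1 g -> linear1 (fun t => sw (g t) F).
Proof. by move=> hF hg; exact: (sw_lin_x hc hF hg). Qed.
Lemma lin_swp (V W : lmodType K) x (F : W -> H -> H -> V) :
  (forall a b, linear1 (fun t => F t a b)) -> linear1 (fun t => sw x (F t)).
Proof. by move=> hF; exact: (sw_lin_p Delta x hF). Qed.
Lemma lin_eZ (V W : lmodType K) (g : W -> H) (v : V) :
  linear1 g -> linear1 (fun t => eps (g t) *: v).
Proof. by move=> hg; exact: (lin_epsZ hc v hg). Qed.
Lemma lin_T (U : lmodType K) (g : U -> H) : linear1 g -> linear1 (fun t => T (g t)).
Proof.
move=> hg; rewrite /Srh; apply: (@lin_swx _ _ (fun a b => be a (S b))) => //.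
split=> y; [apply: lin_beL; exact: lin_id | apply: lin_beR; apply: lin_S; exact: lin_id].
Qed.
Lemma lin_buL (U : lmodType K) (g : U -> H) y : linear1 g -> linear1 (fun t => bu (g t) y).
Proof.
move=> hg; rewrite /bullet; apply: (@lin_swx _ _ (fun a b => mul a (rh b y))) => //.
split=> z; [apply: lin_mulL; exact: lin_id | apply: lin_mulR; apply: lin_rhL; exact: lin_id].
Qed.
Lemma lin_buR (U : lmodType K) (g : U -> H) y : linear1 g -> linear1 (fun t => bu y (g t)).
Proof.
move=> hg; rewrite /bullet; apply: lin_swp => a b.
apply: lin_mulR; apply: lin_rhR; exact: hg.
Qed.

Ltac lin :=
  repeat match goal with |- forall _, _ => intro end;
  rewrite ?/sw3 ?/sw4;
  lazymatch goal with
  | |- bilin _ => split; lin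
  | |- trilin _ => split; lin
  | |- linear1 ?g0 => lazymatch g0 with fun _ => _ => idtac | _ => change (linear1 (fun t => g0 t)) end; first
     [ exact: lin_id
     | match goal with
       | |- linear1 (fun t => mul (@?g t) ?y) => apply: (@lin_mulL _ g y); lin
       | |- linear1 (fun t => mul ?y (@?g t)) => apply: (@lin_mulR _ g y); lin
       | |- linear1 (fun t => rh (@?g t) ?y) => apply: (@lin_rhL _ g y); lin
       | |- linear1 (fun t => rh ?y (@?g t)) => apply: (@lin_rhR _ g y); lin
       | |- linear1 (fun t => be (@?g t) ?y) => apply: (@lin_beL _ g y); lin
       | |- linear1 (fun t => be ?y (@?g t)) => apply: (@lin_beR _ g y); lin
       | |- linear1 (fun t => S (@?g t)) => apply: (@lin_S _ g); lin
       | |- linear1 (fun t => Srh Delta be S (@?g t)) => apply: (@lin_T _ g); lin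
       | |- linear1 (fun t => bullet mul Delta rh (@?g t) ?y) => apply: (@lin_buL _ g y); lin
       | |- linear1 (fun t => bullet mul Delta rh ?y (@?g t)) => apply: (@lin_buR _ g y); lin
       | |- linear1 (fun t => eps (@?g t) *: ?v) => apply: (@lin_eZ _ _ g v); lin
       | |- linear1 (fun t => ?c *: (@?g t)) => apply: (@lin_scale _ _ _ g c); lin
       | |- linear1 (fun t => sw2 Delta (@?g t) ?F) => apply: (@lin_swx _ _ F g); lin
       | |- linear1 (fun t => sw2 Delta ?x (@?F t)) => apply: (@lin_swp _ _ x F); lin
       | |- linear1 (fun t => ?f (@?g t) ?y) => apply: (@lin_fL _ _ f g y); [assumption|lin]
       | |- linear1 (fun t => ?f ?y (@?g t)) => apply: (@lin_fR _ _ f g y); [assumption|lin]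
       | |- linear1 (fun t => ?f (@?g t) ?y ?z) => apply: (@lin_f3a _ _ f g y z); [assumption|lin]
       | |- linear1 (fun t => ?f ?y (@?g t) ?z) => apply: (@lin_f3b _ _ f g y z); [assumption|lin]
       | |- linear1 (fun t => ?f ?y ?z (@?g t)) => apply: (@lin_f3c _ _ f g y z); [assumption|lin]
       | h : _ |- _ => exact: h
       end ]
  end.

Lemma coassoc (V : lmodType K) (f : H -> H -> H -> V) x : trilin f ->
  sw x (fun a b => sw a (fun c d => f c d b)) = sw x (fun a b => sw b (fun c d => f a c d)).
Proof. by move=> hf; rewrite (coalg_coassoc hc hf). Qed.

Definition lin4 (V : lmodType K) (G : H -> H -> H -> H -> V) :=
  [/\ forall b c d, linear1 (fun t => G t b c d), forall a c d, linear1 (fun t => G a t c d),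
      forall a b d, linear1 (fun t => G a b t d) & forall a b c, linear1 (fun t => G a b c t)].

Lemma T_a (V : lmodType K) (G : H -> H -> H -> H -> V) x : lin4 G ->
  sw x (fun a b => sw a (fun u v => sw b (fun p q => G u v p q))) = sw4 Delta x G.
Proof.
case=> h1 h2 h3 h4.
by rewrite (@coassoc _ (fun u v b => sw b (fun p q => G u v p q))) //; lin.
Qed.

Lemma T_b (V : lmodType K) (G : H -> H -> H -> H -> V) x : lin4 G ->
  sw x (fun a b => sw a (fun u r => sw r (fun v p => G u v p b))) = sw4 Delta x G.
Proof.
case=> h1 h2 h3 h4.
rewrite (@coassoc _ (fun u r b => sw r (fun v p => G u v p b))); last by lin.
apply: sw_ext => a b.
by rewrite (@coassoc _ (fun v p q => G a v p q)) //; lin.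
Qed.

Lemma mid4 (V : lmodType K) (G : H -> H -> H -> H -> V) x : lin4 G ->
  sw4 Delta x G = sw x (fun a r => sw r (fun z d => sw z (fun b c => G a b c d))).
Proof.
case=> h1 h2 h3 h4; apply: sw_ext => a r.
by rewrite (@coassoc _ (fun b c d => G a b c d)) //; lin.
Qed.

Lemma mulZr x c y : mul x (c *: y) = c *: mul x y.
Proof. exact: (linZ _ _ ((alg_bilin hA).2 x)). Qed.
Lemma mulZl x c y : mul (c *: x) y = c *: mul x y.
Proof. exact: (linZ _ _ ((alg_bilin hA).1 y)). Qed.
Lemma rhZr x c y : rh x (c *: y) = c *: rh x y.
Proof. exact: (linZ _ _ ((yd_rh_bilin hyd).2 x)). Qed.
Lemma rhZl x c y : rh (c *: x) y = c *: rh x y.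
Proof. exact: (linZ _ _ ((yd_rh_bilin hyd).1 y)). Qed.
Lemma beZr x c y : be x (c *: y) = c *: be x y.
Proof. exact: (linZ _ _ ((yd_be_bilin hyd).2 x)). Qed.
Lemma beZl x c y : be (c *: x) y = c *: be x y.
Proof. exact: (linZ _ _ ((yd_be_bilin hyd).1 y)). Qed.


Lemma swlin (V W : lmodType K) (g : V -> W) x F :
  linear1 g -> g (sw x F) = sw x (fun a b => g (F a b)).
Proof. exact: lin_sum. Qed.
Lemma mul_swr y x F : mul y (sw x F) = sw x (fun a b => mul y (F a b)).
Proof. by apply: swlin; lin. Qed.
Lemma mul_swl y x F : mul (sw x F) y = sw x (fun a b => mul (F a b) y).
Proof. by rewrite (@swlin _ _ (fun u => mul u y)) //; lin. Qed.
Lemma rh_swr y x F : rh y (sw x F) = sw x (fun a b => rh y (F a b)).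
Proof. by apply: swlin; lin. Qed.
Lemma rh_swl y x F : rh (sw x F) y = sw x (fun a b => rh (F a b) y).
Proof. by rewrite (@swlin _ _ (fun u => rh u y)) //; lin. Qed.
Lemma be_swr y x F : be y (sw x F) = sw x (fun a b => be y (F a b)).
Proof. by apply: swlin; lin. Qed.
Lemma f_swr (V : lmodType K) (f : H -> H -> V) y x F : bilin f ->
  f y (sw x F) = sw x (fun a b => f y (F a b)).
Proof. by move=> hf; apply: swlin; lin. Qed.
Lemma f_swl (V : lmodType K) (f : H -> H -> V) y x F : bilin f ->
  f (sw x F) y = sw x (fun a b => f (F a b) y).
Proof. by move=> hf; rewrite (@swlin _ _ (fun u => f u y)) //; lin. Qed.
Lemma cl (V : lmodType K) (g : H -> V) x :
  linear1 g -> sw x (fun a b => eps a *: g b) = g x.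
Proof. by move=> hg; exact: (counit_lg hc x hg). Qed.
Lemma cr (V : lmodType K) (g : H -> V) x :
  linear1 g -> sw x (fun a b => eps b *: g a) = g x.
Proof. by move=> hg; exact: (counit_rg hc x hg). Qed.

Lemma rh_x1 x : rh x one = eps x *: one.
Proof.
rewrite -(yd_P3_l hyd x one).
under sw_ext => a b do rewrite -[be b one](alg_mul1 hA) (yd_P1 hyd).
rewrite coassoc; last by lin.
under sw_ext => a b do rewrite -mul_swr ?(yd_P3_l hyd) ?mulZr ?(alg_mul1r hA).
by rewrite (@cr _ (fun a => rh a one)) //; lin.
Qed.

Lemma rh_1x z : rh one z = z.
Proof.
have e1 : rh one one = one by rewrite rh_x1 (yd_eps_one hyd) scale1r.
have inj w : be one (rh one w) = w.
  have := yd_P3_r hyd one w; rewrite (yd_Delta_one hyd); last by lin.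
  by rewrite (yd_eps_one hyd) scale1r.
have e2 : rh one (rh one z) = rh one z.
  by rewrite (yd_P2 hyd) (yd_Delta_one hyd) ?e1 ?(alg_mul1 hA) //; lin.
by have := congr1 (be one) e2; rewrite !inj.
Qed.

Lemma bu_1x y : bu one y = y.
Proof. by rewrite /bullet (yd_Delta_one hyd) ?(alg_mul1 hA) ?rh_1x //; lin. Qed.

Lemma bu_x1 x : bu x one = x.
Proof.
rewrite /bullet; under sw_ext => a b do rewrite rh_x1 mulZr (alg_mul1r hA).
by rewrite (@cr _ (fun a => a)) //; lin.
Qed.

Lemma P3r_dep (V : lmodType K) (Th : H -> H -> V) z y : bilin Th ->
  sw z (fun p q => sw y (fun c d => Th (be p (rh q c)) d)) = eps z *: sw y (fun c d => Th c d).
Proof.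
move=> hT; rewrite sw_exch -sw_scale; apply: sw_ext => c d.
by rewrite -f_swl // (yd_P3_r hyd) (linZ _ _ (hT.1 d)).
Qed.

Lemma six (V : lmodType K) (G : H -> H -> H -> H -> H -> H -> V) x :
  (forall b c d e f, linear1 (fun t => G t b c d e f)) ->
  (forall a c d e f, linear1 (fun t => G a t c d e f)) ->
  (forall a b d e f, linear1 (fun t => G a b t d e f)) ->
  (forall a b c e f, linear1 (fun t => G a b c t e f)) ->
  (forall a b c d f, linear1 (fun t => G a b c d t f)) ->
  (forall a b c d e, linear1 (fun t => G a b c d e t)) ->
  sw x (fun a b => sw4 Delta a (fun a1 a2 a3 a4 => sw b (fun b1 b2 => G a1 a2 a3 a4 b1 b2)))
  = sw4 Delta x (fun a1 a2 a3 r => sw r (fun z b2 => sw z (fun a4 b1 => G a1 a2 a3 a4 b1 b2))).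
Proof.
move=> h1 h2 h3 h4 h5 h6; rewrite /sw4 /sw3.
rewrite coassoc; last by lin.
apply: sw_ext => a1 s.
rewrite coassoc; last by lin.
apply: sw_ext => a2 s'.
rewrite coassoc; last by lin.
apply: sw_ext => a3 s''.
by rewrite [RHS]coassoc //; lin.
Qed.

Lemma DM x y (V : lmodType K) (f : H -> H -> V) : bilin f ->
  sw (bu x y) f = sw x (fun x1 x2 => sw y (fun y1 y2 => f (bu x1 y1) (bu x2 y2))).
Proof.
move=> hf; rewrite /bullet (@swlin _ _ (fun t => sw t f)); last by lin.
transitivity (sw x (fun a b => sw4 Delta a (fun a1 a2 a3 a4 => sw b (fun b1 b2 =>
   sw y (fun y1 y2 => f (mul a1 (rh a2 (be a4 (rh b1 y1)))) (mul a3 (rh b2 y2))))))).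
  apply: sw_ext => a b; rewrite (yd_P5 hyd _ _ hf).
  apply: sw_ext => a1 q; apply: sw_ext => a2 r; apply: sw_ext => a3 a4.
  by rewrite (yd_rh_Delta hyd); last by lin.
rewrite six; try by lin.
transitivity (sw4 Delta x (fun a1 a2 a3 a4 =>
   sw y (fun y1 y2 => f (mul a1 (rh a2 y1)) (mul a3 (rh a4 y2))))).
  rewrite /sw4 /sw3; apply: sw_ext => a1 q; apply: sw_ext => a2 r; apply: sw_ext => a3 s.
  transitivity (sw s (fun z b2 => eps z *: sw y (fun y1 y2 => f (mul a1 (rh a2 y1)) (mul a3 (rh b2 y2))))).
    apply: sw_ext => z b2.
    by rewrite (@P3r_dep _ (fun E d => f (mul a1 (rh a2 E)) (mul a3 (rh b2 d)))) //; lin.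
  by rewrite (@cl _ (fun b2 => sw y (fun y1 y2 => f (mul a1 (rh a2 y1)) (mul a3 (rh b2 y2))))) //; lin.
rewrite -T_a; last by split; lin.
apply: eq_bigr => -[x1 x2] _ /=.
transitivity (sw y (fun y1 y2 => sw x1 (fun u v => sw x2 (fun p q => f (mul u (rh v y1)) (mul p (rh q y2)))))).
  by rewrite [RHS]sw_exch; apply: sw_ext => u v; rewrite [RHS]sw_exch.
apply: sw_ext => y1 y2.
rewrite f_swl //; apply: sw_ext => u v; by rewrite f_swr.
Qed.
Lemma P2' x y z : rh (bu x y) z = rh x (rh y z).
Proof. by rewrite (yd_P2 hyd). Qed.

Lemma bu_assoc x y z : bu x (bu y z) = bu (bu x y) z.
Proof.
rewrite [RHS](DM _ _ (f := fun a b => mul a (rh b z))); last by lin.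
transitivity (sw x (fun a b => sw y (fun c d => sw b (fun e g => mul a (mul (rh e c) (rh g (rh d z))))))).
  rewrite {1}/bullet; apply: sw_ext => a b.
  rewrite /bullet rh_swr mul_swr; apply: sw_ext => c d.
  by rewrite (yd_P1 hyd) mul_swr.
transitivity (sw x (fun a b => sw y (fun c d => sw a (fun u v => mul (mul u (rh v c)) (rh b (rh d z)))))); last first.
  apply: sw_ext => a b; apply: sw_ext => c d.
  by rewrite P2' /bullet mul_swl.
rewrite sw_exch [RHS]sw_exch; apply: sw_ext => c d.
rewrite [RHS]coassoc; last by lin.
apply: sw_ext => a b; apply: sw_ext => e g.
by rewrite (alg_assoc hA).
Qed.

Lemma eps0 : eps 0 = 0.
Proof.
have := coalg_eps_lin hc 1 0 0; rewrite scale1r addr0 mul1r => e.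
by have := congr1 (fun v => v - eps 0) e; rewrite /= addrK subrr.
Qed.

Lemma eps_sum (I : Type) (s : seq I) (F : I -> H) :
  eps (\sum_(i <- s) F i) = \sum_(i <- s) eps (F i).
Proof.
have e0 := eps0.
elim: s => [|i s IH]; first by rewrite !big_nil.
by rewrite !big_cons -[F i]scale1r (coalg_eps_lin hc) mul1r scale1r IH.
Qed.

Lemma eps_scale c v : eps (c *: v) = c * eps v.
Proof. by have := coalg_eps_lin hc c v 0; rewrite addr0 eps0 addr0. Qed.

Lemma eps_bu x y : eps (bu x y) = eps x * eps y.
Proof.
rewrite /bullet /sw2 eps_sum.
under eq_bigr => p _ do rewrite (yd_eps_mul hyd) (yd_rh_eps hyd) mulrA.
rewrite -mulr_suml; congr (_ * _).
by rewrite -{2}(coalg_counit_l hc x) /sw2 eps_sum; apply: eq_bigr => p _; rewrite eps_scale.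
Qed.

Lemma antipode_l x : sw x (fun a b => bu a (T b)) = eps x *: one.
Proof.
transitivity (sw4 Delta x (fun a1 a2 b1 b2 => mul a1 (rh a2 (be b1 (S b2))))).
  rewrite -T_a; last by split; lin.
  apply: sw_ext => a b; rewrite /bullet /Srh; apply: sw_ext => a1 a2.
  by rewrite rh_swr mul_swr.
rewrite mid4; last by split; lin.
rewrite -(yd_S_l hyd x); apply: sw_ext => a1 r.
transitivity (sw r (fun z d => eps z *: mul a1 (S d))).
  by apply: sw_ext => z d; rewrite -mul_swr (yd_P3_l hyd) mulZr.
by rewrite (@cl _ (fun d => mul a1 (S d))) //; lin.
Qed.

Lemma claimC x z : sw x (fun a b => rh a (rh (T b) z)) = eps x *: z.
Proof.
transitivity (sw x (fun a b => rh (bu a (T b)) z)).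
  by apply: sw_ext => a b; rewrite P2'.
by rewrite -rh_swl antipode_l rhZl rh_1x.
Qed.

Lemma claimB x z : rh (T x) z = be x z.
Proof.
transitivity (sw x (fun a b => eps a *: rh (T b) z)).
  by rewrite (@cl _ (fun b => rh (T b) z)) //; lin.
transitivity (sw x (fun a b => sw a (fun c d => be c (rh d (rh (T b) z))))).
  by apply: sw_ext => a b; rewrite (yd_P3_r hyd).
rewrite coassoc; last by lin.
transitivity (sw x (fun a b => eps b *: be a z)).
  by apply: sw_ext => a b; rewrite -be_swr claimC beZr.
by rewrite (@cr _ (fun a => be a z)) //; lin.
Qed.

Lemma be_x1 x : be x one = eps x *: one.
Proof.
rewrite -(yd_P3_r hyd x one).
transitivity (sw x (fun a b => eps b *: be a one)).
  by rewrite (@cr _ (fun a => be a one)) //; lin.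
by apply: sw_ext => a b; rewrite rh_x1 beZr.
Qed.

Lemma claimD x y z : be x (mul y z) = sw x (fun a b => mul (be b y) (be a z)).
Proof.
set w := fun t => sw t (fun a b => mul (be b y) (be a z)).
have hw : linear1 w by rewrite /w; lin.
have E b : sw b (fun c d => rh c (w d)) = eps b *: mul y z.
  transitivity (sw4 Delta b (fun c1 c2 p q => mul (rh c1 (be q y)) (rh c2 (be p z)))).
    rewrite -T_a; last by split; lin.
    apply: sw_ext => c d; rewrite /w rh_swr sw_exch; apply: sw_ext => p q.
    by rewrite (yd_P1 hyd).
  rewrite mid4; last by split; lin.
  transitivity (sw b (fun c1 r => mul (rh c1 (be r y)) z)); last first.
    by rewrite -mul_swl (yd_P3_l hyd) mulZl.
  apply: sw_ext => c1 r.
  transitivity (sw r (fun s q => eps s *: mul (rh c1 (be q y)) z)).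
    by apply: sw_ext => s q; rewrite -mul_swr (yd_P3_l hyd) mulZr.
  by rewrite (@cl _ (fun q => mul (rh c1 (be q y)) z)) //; lin.
symmetry; change (w x = be x (mul y z)).
transitivity (sw x (fun a b => eps a *: w b)); first by rewrite (@cl _ w).
transitivity (sw x (fun a b => sw a (fun c d => be c (rh d (w b))))).
  by apply: sw_ext => a b; rewrite (yd_P3_r hyd).
rewrite coassoc; last by rewrite /w; lin.
transitivity (sw x (fun a b => eps b *: be a (mul y z))).
  by apply: sw_ext => a b; rewrite -be_swr E beZr.
by rewrite (@cr _ (fun a => be a (mul y z))) //; lin.
Qed.

Lemma antipode_r x : sw x (fun a b => bu (T a) b) = eps x *: one.
Proof.
transitivity (sw x (fun a b => sw a (fun a1 a2 => mul (T a2) (be a1 b)))).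
  apply: sw_ext => a b; rewrite /bullet (yd_P6_Srh hyd); last by lin.
  by apply: sw_ext => a1 a2; rewrite claimB.
transitivity (sw4 Delta x (fun a1 c d b => mul (be c (S d)) (be a1 b))).
  rewrite -T_b; last by split; lin.
  apply: sw_ext => a b; apply: sw_ext => a1 a2.
  by rewrite /Srh mul_swl.
rewrite -T_a; last by split; lin.
transitivity (sw x (fun z r => eps r *: be z one)); last first.
  by rewrite (@cr _ (fun z => be z one)) ?be_x1 //; lin.
apply: sw_ext => z r; rewrite sw_exch.
transitivity (sw r (fun d b => be z (mul (S d) b))).
  by apply: sw_ext => d b; rewrite claimD.
by rewrite -be_swr (yd_S_r hyd) beZr.
Qed.

Lemma main : is_Hopf bu one Delta eps T.
Proof.
constructor.
- constructor.
  + constructor.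
    * by split; lin.
    * exact: bu_assoc.
    * exact: bu_1x.
    * exact: bu_x1.
  + exact: hc.
  + by move=> x y V f hf; exact: DM.
  + exact: (yd_Delta_one hyd).
  + exact: eps_bu.
  + exact: (yd_eps_one hyd).
- by lin.
- exact: antipode_l.
- exact: antipode_r.
Qed.
End Main.

Unset Implicit Arguments.

Theorem proposition3 (K : fieldType) (H : lmodType K)
    (mul : H -> H -> H) (one : H) (Delta : H -> seq (H * H)) (eps : H -> K)
    (S : H -> H) (rh be : H -> H -> H) :
  is_YD_post_Hopf mul one Delta eps S rh be ->
  is_Hopf (bullet mul Delta rh) one Delta eps (Srh Delta be S).
Proof. by move=> hyd; exact: (main hyd). Qed.
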